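(* In the setting described in the context (with $L=[0,1]$), let $q\in\{1,\dots,n\}$ and assume there exists $A\subseteq\mathcal C$ with $|A|=n-q$ and $\nu_q(A)=0$. Then $$\min_{\mu\ q\text{-minitive capacity}}\ \max_{1\le k\le N}|S_\mu(x^{(k)})-\alpha^{(k)}|=\nabla_q,$$ where the minimum is over all $q$-minitive capacities $\mu:2^{\mathcal C}\to[0,1]$ (and is attained).
   Context: Let $\mathcal C=\{1,\dots,n\}$ and $L=[0,1]$. A capacity is a map $\mu:2^{\mathcal C}\to[0,1]$ with $\mu(\emptyset)=0$, $\mu(\mathcal C)=1$, monotone for inclusion; it is $q$-minitive if for all $X$ with $|X|<n-q$, $\mu(X)=\min_{Y\supsetneq X,\ |Y|\ge n-q}\mu(Y)$. Sugeno integral: $S_\mu(x)=\max_{A\subseteq\mathcal C}\min(\min_{i\in A}x_i,\mu(A))$ with $\min_{i\in\emptyset}x_i=1$. Training data: $N$ pairs $(x^{(k)},\alpha^{(k)})$, $x^{(k)}\in[0,1]^n$, $\alpha^{(k)}\in[0,1]$. For $A\subsetneq\mathcal C$, $\gamma_{k,A}=\max_{i\in\mathcal C\setminus A}x^{(k)}_i$. Write $t^+=\max(t,0)$. For $1\le i\le N$ and $A\subsetneq\mathcal C$ with $|A|\ge n-q$, let $\sigma_\epsilon(\alpha^{(i)},\gamma_{l,A},\alpha^{(l)})=\min\big(\tfrac{(\alpha^{(l)}-\alpha^{(i)})^+}{2},(\alpha^{(l)}-\gamma_{l,A})^+\big)$, $\nabla_{i,A}=\max\big((\gamma_{i,A}-\alpha^{(i)})^+,\max_{1\le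 l\le N}\sigma_\epsilon(\alpha^{(i)},\gamma_{l,A},\alpha^{(l)})\big)$, $\nabla_i=\min_{A\subsetneq\mathcal C,\ |A|\ge n-q}\nabla_{i,A}$, and $\nabla_q=\max_{1\le i\le N}\nabla_i$. For $A\subsetneq\mathcal C$ with $|A|\ge n-q$, $\nu_q(A)=\max_{1\le k\le N}\big(\gamma_{k,A}\,\epsilon\,\max(\alpha^{(k)}-\nabla_q,0)\big)$, where $a\,\epsilon\,b=b$ if $a<b$ and $a\,\epsilon\,b=0$ if $a\ge b$. *)

(* Defs.v *)
From mathcomp Require Import all_boot all_order all_algebra.
From mathcomp Require Import reals.
Set Implicit Arguments. Unset Strict Implicit. Unset Printing Implicit Defensive.
Import Order.TTheory GRing.Theory Num.Theory.
Local Open Scope ring_scope.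

Section Defs.
Variable R : realType.

Definition pospart (t : R) : R := Num.max t 0.

Definition epsop (a b : R) : R := if a < b then b else 0.

(* capacity on C = 'I_n (index i : 'I_n stands for criterion i+1) *)
Definition capacity (n : nat) (mu : {set 'I_n} -> R) : Prop :=
  [/\ mu set0 = 0, mu setT = 1,
      (forall A, 0 <= mu A <= 1) &
      (forall A B : {set 'I_n}, A \subset B -> mu A <= mu B)].

(* q-minitive: for |X| < n-q, mu X = min over Y strictly containing X with |Y| >= n-q.
   The index set is nonempty (it contains setT), so the default 1 of the min is irrelevant. *)
Definition qminitive (n q : nat) (mu : {set 'I_n} -> R) : Prop :=
  forall X : {set 'I_n}, (#|X| < n - q)%N ->
    mu X = \big[Num.min/1]_(Y : {set 'I_n} | (X \proper Y) && (n - q <= #|Y|)%N) mu Y.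

(* Sugeno integral; empty min is 1, max over all A (A = set0 contributes 0) *)
Definition sugeno (n : nat) (mu : {set 'I_n} -> R) (x : 'I_n -> R) : R :=
  \big[Num.max/0]_(A : {set 'I_n}) Num.min (\big[Num.min/1]_(i in A) x i) (mu A).

Variables (n N : nat) (x : 'I_N -> 'I_n -> R) (alpha : 'I_N -> R).

(* gamma_{k,A} = max_{i notin A} x^(k)_i  (A proper, so the range is nonempty; x >= 0) *)
Definition gamma (k : 'I_N) (A : {set 'I_n}) : R :=
  \big[Num.max/0]_(i in ~: A) x k i.

Definition sigma_eps (ai gla al : R) : R :=
  Num.min (pospart (al - ai) / 2) (pospart (al - gla)).

Definition nablaIA (i : 'I_N) (A : {set 'I_n}) : R :=
  Num.max (pospart (gamma i A - alpha i))
          (\big[Num.max/0]_(l : 'I_N) sigma_eps (alpha i) (gamma l A) (alpha l)).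

(* min over proper A with |A| >= n-q (nonempty family for 1 <= q <= n; values are in [0,1]) *)
Definition nablaI (q : nat) (i : 'I_N) : R :=
  \big[Num.min/1]_(A : {set 'I_n} | (A \proper setT) && (n - q <= #|A|)%N) nablaIA i A.

Definition nablaq (q : nat) : R := \big[Num.max/0]_(i : 'I_N) nablaI q i.

Definition nuq (q : nat) (A : {set 'I_n}) : R :=
  \big[Num.max/0]_(k : 'I_N) epsop (gamma k A) (Num.max (alpha k - nablaq q) 0).

Definition sugeno_error (mu : {set 'I_n} -> R) : R :=
  \big[Num.max/0]_(k : 'I_N) `|sugeno mu (x k) - alpha k|.

End Defs.

(* Main.v *)
Require Import Defs.
From mathcomp Require Import all_boot all_order all_algebra.
From mathcomp Require Import reals lra zify.
Import Order.TTheory GRing.Theory Num.Theory.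
Local Open Scope ring_scope.

Section S.
Variables (R : realType) (n N : nat) (x : 'I_N -> 'I_n -> R) (alpha : 'I_N -> R) (q : nat).
Hypothesis hx : forall k i, 0 <= x k i <= 1.
Hypothesis ha : forall k, 0 <= alpha k <= 1.
Hypothesis hq : (1 <= q <= n)%N.

Definition Fam (A : {set 'I_n}) := (A \proper setT) && (n - q <= #|A|)%N.

Lemma sug_ge0 (mu : {set 'I_n} -> R) xx : 0 <= sugeno mu xx.
Proof. exact: bigmax_ge_id. Qed.

Lemma gamma_ge0 k A : 0 <= gamma x k A.
Proof. exact: bigmax_ge_id. Qed.

Lemma gamma_le1 k A : gamma x k A <= 1.
Proof. apply: bigmax_le => // i _; by case/andP: (hx k i). Qed.

Lemma sug_le (mu : {set 'I_n} -> R) k A :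
  (forall A B : {set 'I_n}, A \subset B -> mu A <= mu B) ->
  sugeno mu (x k) <= Num.max (gamma x k A) (mu A).
Proof.
move=> mono; apply: bigmax_le.
  by rewrite le_max gamma_ge0.
move=> B _; case: (boolP (B \subset A)) => [sBA|/subsetPn [i iB iA]].
  by rewrite ge_min; apply/orP; right; rewrite le_max (mono _ _ sBA) orbT.
rewrite ge_min; apply/orP; left; rewrite le_max; apply/orP; left.
apply: (@le_trans _ _ (x k i)); first exact: bigmin_le_cond.
by apply: le_bigmax_cond; rewrite in_setC.
Qed.

Lemma sug_ge (mu : {set 'I_n} -> R) k t :
  capacity mu -> qminitive q mu -> t <= 1 ->
  (forall A, Fam A -> t <= Num.max (gamma x k A) (mu A)) -> t <= sugeno mu (x k).
Proof.
move=> [mu0 muT mu01 mono] qm t1 H.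
case: (leP t 0) => [t0|t0]; first exact: le_trans t0 (sug_ge0 _ _).
set B := [set i | t <= x k i].
have Hg : forall Y : {set 'I_n}, B \subset Y -> gamma x k Y < t.
  move=> Y sBY; apply/bigmax_ltP; split => // i; rewrite in_setC => iY.
  have : i \notin B by apply: contra iY; apply: (subsetP sBY).
  by rewrite inE ltNge.
have HY : forall Y : {set 'I_n}, B \subset Y -> (n - q <= #|Y|)%N -> t <= mu Y.
  move=> Y sBY cY; case: (eqVneq Y setT) => [->|YT]; first by rewrite muT.
  have := H Y; rewrite /Fam properT YT cY => /(_ isT).
  by rewrite le_max leNgt (Hg _ sBY).
apply: (@bigmax_sup _ _ _ _ B) => //; rewrite le_min; apply/andP; split.
  by apply: le_bigmin => // i; rewrite inE.
case: (leqP (n - q) #|B|) => cB; first exact: HY.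
rewrite (qm B cB); apply: le_bigmin => // Y /andP [pBY cY].
by apply: HY => //; apply: proper_sub.
Qed.

Lemma Fam_ex : exists A, Fam A.
Proof.
case/andP: hq => q1 qn.
have n0 : (0 < n)%N by apply: leq_trans qn.
pose i0 := Ordinal n0.
exists (setT :\ i0); rewrite /Fam properD1 ?inE //=.
have := cardsD1 i0 [set: 'I_n]; rewrite inE cardsT card_ord add1n.
move: (#|_|) => c e; lia.
Qed.

Lemma pospart_le (t e : R) : t <= e -> 0 <= e -> pospart t <= e.
Proof. by move=> h1 h2; rewrite /pospart ge_max h1 h2. Qed.

Lemma lower (mu : {set 'I_n} -> R) : capacity mu -> qminitive q mu ->
  nablaq x alpha q <= sugeno_error x alpha mu.
Proof.
move=> cap qm; have [mu0 muT mu01 mono] := cap.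
set E := sugeno_error x alpha mu.
have E0 : 0 <= E by apply: bigmax_ge_id.
have HE : forall k, `|sugeno mu (x k) - alpha k| <= E.
  by move=> k; rewrite /E /sugeno_error; exact: le_bigmax.
apply: bigmax_le => // i _.
have [A1 FA1] := Fam_ex.
have [A0 FA0 eA0] := @eq_bigmin _ _ _ 1 A1 Fam (fun A => Num.max (gamma x i A) (mu A)) FA1
  (fun A _ => ltac:(rewrite ge_max gamma_le1; by case/andP: (mu01 A))).
set m := Num.max (gamma x i A0) (mu A0) in eA0.
have Sim : sugeno mu (x i) = m.
  apply: le_anti; rewrite sug_le //=; apply: sug_ge => //.
    by rewrite ge_max gamma_le1; case/andP: (mu01 A0).
  by move=> A FA; rewrite -eA0; apply: bigmin_le_cond.
apply: (@le_trans _ _ (nablaIA x alpha i A0)).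
  by apply: bigmin_le_cond.
rewrite /nablaIA ge_max; apply/andP; split.
  have := HE i; rewrite Sim /pospart ge_max E0 andbT ler_norml /m.
  have := le_max (gamma x i A0) (gamma x i A0) (mu A0); rewrite lexx /= => g.
  move=> /andP [_ h]; lra.
apply: bigmax_le => // l _.
rewrite /sigma_eps /pospart ge_min.
have := HE l; have := HE i; rewrite !ler_norml Sim => /andP [h1 h2] /andP [h3 h4].
case: (leP (alpha l - gamma x l A0) E) => hg.
  by apply/orP; right; rewrite ge_max hg E0.
apply/orP; left.
have Sl : sugeno mu (x l) <= m.
  have := sug_le mu l A0 mono; rewrite le_max => /orP [] h; first lra.
  by apply: le_trans h _; rewrite /m le_max lexx orbT.
have hp := @pospart_le (alpha l - alpha i) (E *+ 2) ltac:(lra) ltac:(lra).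
change (pospart (alpha l - alpha i) / 2 <= E); lra.
Qed.

Notation D := (nablaq x alpha q).
Notation nu := (nuq x alpha q).
Definition nu' (A : {set 'I_n}) := if A == setT then 1 else nu A.
Definition mu0 (X : {set 'I_n}) : R := if (n - q <= #|X|)%N then nu' X else
  \big[Num.min/1]_(Y : {set 'I_n} | (X \proper Y) && (n - q <= #|Y|)%N) nu' Y.

Lemma D0 : 0 <= D.
Proof. exact: bigmax_ge_id. Qed.

Lemma nu01 (A : {set 'I_n}) : 0 <= nu A <= 1.
Proof.
rewrite /nu /nuq bigmax_ge_id /=; apply: bigmax_le => // k _.
rewrite /epsop; case: ifP => // _; rewrite ge_max ler01 andbT.
have := ha k; have := D0; lra.
Qed.

Lemma gamma_anti k (A B : {set 'I_n}) : A \subset B -> gamma x k B <= gamma x k A.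
Proof.
move=> sAB; apply: bigmax_le; first exact: gamma_ge0.
move=> i; rewrite !in_setC => iB; apply: le_bigmax_cond; rewrite in_setC.
by apply: contra iB; apply: (subsetP sAB).
Qed.

Lemma nu_mono (A B : {set 'I_n}) : A \subset B -> nu A <= nu B.
Proof.
move=> sAB; apply: le_bigmax2 => k _; rewrite /epsop.
case: ifP => h; last by case: ifP => // _; rewrite le_max lexx orbT.
by rewrite (le_lt_trans (gamma_anti k _ _ sAB) h).
Qed.

Lemma nu'01 (A : {set 'I_n}) : 0 <= nu' A <= 1.
Proof. by rewrite /nu'; case: ifP => _; [rewrite ler01 lexx | exact: nu01]. Qed.

Lemma nu'_mono (A B : {set 'I_n}) : A \subset B -> nu' A <= nu' B.
Proof.
move=> sAB; rewrite /nu'; case: (eqVneq B setT) => [_|BT].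
  by case: ifP => _ //; case/andP: (nu01 A).
have AT : A != setT.
  by apply: contra BT => /eqP AT; rewrite eqEsubset subsetT -AT.
by rewrite (negPf AT); exact: nu_mono.
Qed.

Lemma mu0_big (X : {set 'I_n}) : (n - q <= #|X|)%N -> mu0 X = nu' X.
Proof. by rewrite /mu0 => ->. Qed.

Lemma mu0_qm : qminitive q mu0.
Proof.
move=> X cX; rewrite /mu0 leqNgt cX /=.
by apply: eq_bigr => Y /andP [_ ->].
Qed.

Lemma mu0_01 X : 0 <= mu0 X <= 1.
Proof.
rewrite /mu0; case: ifP => _; first exact: nu'01.
rewrite bigmin_le_id andbT; apply: le_bigmin => // Y _.
by case/andP: (nu'01 Y).
Qed.

Lemma mu0_mono (X Y : {set 'I_n}) : X \subset Y -> mu0 X <= mu0 Y.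
Proof.
move=> sXY; rewrite /mu0.
have cXY := subset_leq_card sXY.
case: ifP => cX; case: ifP => cY.
- exact: nu'_mono.
- by move: cY; rewrite (leq_trans cX cXY).
- case: (eqVneq X Y) => [eXY|nXY]; first by move: cX; rewrite eXY cY.
  by apply: bigmin_le_cond; rewrite cY andbT properEneq nXY sXY.
- apply: le_bigmin; first exact: bigmin_le_id.
  move=> Z /andP [pYZ cZ]; apply: bigmin_le_cond.
  by rewrite cZ andbT (sub_proper_trans sXY pYZ).
Qed.

Lemma n0 : (0 < n)%N.
Proof. by case/andP: hq => q1 qn; apply: leq_trans qn. Qed.

Lemma setT_neq0 : [set: 'I_n] != set0.
Proof.
apply/eqP => h; have := cardsT 'I_n; rewrite h cards0 card_ord => e.
by move: n0; rewrite -e.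
Qed.

Lemma mu0_cap : (exists A : {set 'I_n}, #|A| = (n - q)%N /\ nu A = 0) ->
  capacity mu0.
Proof.
move=> [A [cA nA]]; split.
- rewrite /mu0 cards0; case: ifP => c0.
    have A0 : A = set0 by apply/eqP; rewrite -cards_eq0 cA; lia.
    rewrite /nu' eq_sym (negPf setT_neq0) -A0 nA //.
  have AT : A != setT.
    apply/eqP => e; move: cA; rewrite e cardsT card_ord; case/andP: hq => q1 qn; lia.
  apply: le_anti; apply/andP; split.
    apply: (@bigmin_inf _ _ _ _ A) => //.
      rewrite cA leqnn andbT proper0; apply/eqP => e; move: cA c0; rewrite e cards0; lia.
    by rewrite /nu' (negPf AT) nA.
  apply: le_bigmin => // Y _; by case/andP: (nu'01 Y).
- by rewrite mu0_big ?cardsT ?card_ord ?leq_subr // /nu' eqxx.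
- exact: mu0_01.
- exact: mu0_mono.
Qed.

Lemma nablaIA_le1 i A : nablaIA x alpha i A <= 1.
Proof.
rewrite /nablaIA ge_max; apply/andP; split.
  apply: pospart_le; last exact: ler01.
  have := gamma_ge0 i A; have := gamma_le1 i A; have := ha i; lra.
apply: bigmax_le => // l _; rewrite /sigma_eps ge_min; apply/orP; left.
have hp := @pospart_le (alpha l - alpha i) 1 ltac:(have := ha i; have := ha l; lra) ler01.
change (pospart (alpha l - alpha i) / 2 <= 1); lra.
Qed.

Lemma upper_k (hA : exists A : {set 'I_n}, #|A| = (n - q)%N /\ nu A = 0) k :
  `|sugeno mu0 (x k) - alpha k| <= D.
Proof.
have cap := mu0_cap hA; have [_ _ _ mono] := cap.
have Fnu : forall A, Fam A -> mu0 A = nu A.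
  move=> A /andP [pA cA]; rewrite mu0_big // /nu'.
  by rewrite properT in pA; rewrite (negPf pA).
rewrite ler_norml; apply/andP; split.
  have : Num.max (alpha k - D) 0 <= sugeno mu0 (x k).
    apply: (sug_ge _ _ _ cap mu0_qm); first by rewrite ge_max ler01 andbT; have := ha k; have := D0; lra.
    move=> A FA; rewrite Fnu // le_max.
    case: (leP (Num.max (alpha k - D) 0) (gamma x k A)) => //= h.
    apply: (@bigmax_sup _ _ _ _ k) => //; by rewrite /epsop h.
  rewrite ge_max => /andP [h _]; lra.
have [A1 FA1] := Fam_ex.
have [A0 FA0 eA0] := @eq_bigmin _ _ _ 1 A1 Fam (nablaIA x alpha k) FA1
  (fun A _ => nablaIA_le1 k A).
have hD : nablaIA x alpha k A0 <= D.
  rewrite -eA0; exact: (le_bigmax 0 (nablaI x alpha q) k).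
move: hD; rewrite /nablaIA ge_max => /andP [hg /bigmax_leP [_ hs]].
have hg' : gamma x k A0 <= alpha k + D.
  move: hg; rewrite /pospart ge_max => /andP [h _]; lra.
have hn : nu A0 <= alpha k + D.
  apply: bigmax_le; first by have := ha k; have := D0; lra.
  move=> l _; rewrite /epsop; case: ifP => h; last by have := ha k; have := D0; lra.
  have := hs l isT; rewrite /sigma_eps ge_min => /orP [] h2.
    have hp : pospart (alpha l - alpha k) <= D *+ 2 by lra.
    rewrite ge_max; apply/andP; split; last by have := ha k; have := D0; lra.
    move: hp; rewrite /pospart ge_max => /andP [hp _]; lra.
  move: h2; rewrite /pospart ge_max => /andP [h2 _].
  move: h; rewrite lt_max => /orP [] h; first lra.
  by have := gamma_ge0 l A0; lra.
have := sug_le mu0 k A0 mono; rewrite Fnu // => h.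
have : Num.max (gamma x k A0) (nu A0) <= alpha k + D by rewrite ge_max hg' hn.
lra.
Qed.

End S.

Theorem theorem5 (R : realType) (n N : nat) (x : 'I_N -> 'I_n -> R) (alpha : 'I_N -> R)
  (q : nat) :
  (forall k i, 0 <= x k i <= 1) ->
  (forall k, 0 <= alpha k <= 1) ->
  (1 <= q <= n)%N ->
  (exists A : {set 'I_n}, #|A| = (n - q)%N /\ nuq x alpha q A = 0) ->
  (exists mu : {set 'I_n} -> R,
      [/\ capacity mu, qminitive q mu & sugeno_error x alpha mu = nablaq x alpha q]) /\
  (forall mu : {set 'I_n} -> R, capacity mu -> qminitive q mu ->
      nablaq x alpha q <= sugeno_error x alpha mu).
Proof.
move=> hx ha hq hA.
have low : forall mu : {set 'I_n} -> R, capacity mu -> qminitive q mu ->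
      nablaq x alpha q <= sugeno_error x alpha mu.
  by move=> mu; apply: lower.
split => //.
have cap : capacity (@mu0 R n N x alpha q) by apply: mu0_cap.
exists (@mu0 R n N x alpha q); split => //; first exact: mu0_qm.
apply: le_anti; rewrite low ?andbT //; last exact: mu0_qm.
apply: bigmax_le; first exact: D0.
by move=> k _; apply: upper_k.
Qed.
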